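(* Let $G$ be a directed graph with $n$ nodes and $Z$ a zero forcing set of $G$ with $|Z|=m$. Let $\mathcal{C}$ be a set of node-disjoint chains covering $V(G)$ with set of sources $Z$ and $T$ a time function for $\mathcal{C}$ such that $G\in\mathcal{G}^{\mathcal{C},T}$. Then the edge set $E_{\mathrm{perf}}$ of $\mathcal{G}^{\mathcal{C},T}_{\mathrm{perf}}$ satisfies $|E_{\mathrm{perf}}|=\frac12 n(n+1)+\frac12 m(2n-m-1)$.
   Context: Graphs are directed, self-loops allowed. Zero forcing: with nodes colored black/white, a black node with exactly one white out-neighbor turns it black; $S$ is a zero forcing set if starting from black set $S$ and repeating this rule makes all nodes black. A chain is a directed path graph with source (start node) and sink (end node); for a non-sink $v$, $v+1$ is its out-neighbor. For node-disjoint chains $\mathcal{C}=\{C_1,\ldots,C_m\}$, $V=\bigcup_iV(C_i)$, $\gamma=|V|-m+1$, a time function is $T:V\to\{1,\ldots,\gamma\}$ with (1) $T(v)=1$ for every source; (2) distinct non-source nodes get distinct values; (3) $T(v)<T(v+1)$ for non-sink $v$. $T_{\max}(v)=\gamma$ for a sink $v$, else $T_{\max}(v)=T(v+1)-1$. $\mathcal{G}^{\mathcal{C},T}$ is the set of graphs $G$ with $V(G)=V$, $\bigcup_iE(C_i)\subseteq E(G)$, and $(u,v)\notin E(G)$ whenever $(u,v)\notin\bigcup_iE(C_i)$ and $T_{\max}(u)<T(v)$. $\mathcal{G}^{\mathcal{C},T}_{\mathrm{perf}}$ has node set $V$ and edge set $E_{\mathrm{perf}}=\bigcup_iE(C_i)\cup\{(u,v)\in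 V\times V: T_{\max}(u)\geq T(v)\}$. *)

(* Defs.v *)
From mathcomp Require Import all_boot.
Set Implicit Arguments. Unset Strict Implicit. Unset Printing Implicit Defensive.

(* Directed graphs on a finite node type V are edge relations E : rel V
   (self-loops allowed). *)

Section ZeroForcing.
Variable V : finType.
Variable E : rel V.

Inductive forces_to (S : {set V}) : {set V} -> Prop :=
| forces_base : forces_to S S
| forces_step (B : {set V}) (u w : V) :
    forces_to S B -> u \in B -> w \notin B -> E u w ->
    (forall x, E u x -> x \notin B -> x = w) ->
    forces_to S (w |: B).

Definition zero_forcing_set (S : {set V}) : Prop := forces_to S [set: V].
End ZeroForcing.

Section Chains.
Variable V : finType.
(* A family of chains is a list of node sequences; chain c = [v1; ...; vk]
   has edges (v_i, v_{i+1}), source v1 and sink vk. *)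
Variable C : seq (seq V).

Definition chain_edges : {set V * V} :=
  [set p | has (fun c => p \in zip c (behead c)) C].

Definition chain_cover : Prop :=
  all (fun c => c != [::]) C /\ uniq (flatten C) /\ (forall v : V, v \in flatten C).

Definition sources : {set V} :=
  [set v | has (fun c => (c != [::]) && (head v c == v)) C].

Definition is_source (v : V) : bool := v \in sources.

Definition gamma : nat := #|V| - size C + 1.

Definition time_function (T : V -> nat) : Prop :=
  (forall v, 1 <= T v <= gamma) /\
  (forall v, is_source v -> T v = 1) /\
  {in [pred v | ~~ is_source v] &, injective T} /\
  (forall u v, (u, v) \in chain_edges -> T u < T v).

Definition Tmax (T : V -> nat) (v : V) : nat :=
  match [pick w | (v, w) \in chain_edges] with
  | Some w => T w - 1
  | None => gamma
  end.

Definition in_graph_class (T : V -> nat) (E : rel V) : Prop :=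
  (forall u v, (u, v) \in chain_edges -> E u v) /\
  (forall u v, (u, v) \notin chain_edges -> Tmax T u < T v -> ~~ E u v).

Definition E_perf (T : V -> nat) : {set V * V} :=
  chain_edges :|: [set p | T p.2 <= Tmax T p.1].
End Chains.

(* Main.v *)
Require Import Defs.
From mathcomp Require Import all_boot zify.
Set Implicit Arguments. Unset Strict Implicit. Unset Printing Implicit Defensive.

Section Seqs.
Variable V : eqType.

Lemma zip_mem (c : seq V) u w : (u, w) \in zip c (behead c) -> u \in c /\ w \in c.
Proof.
elim: c => [|x c IH] //=; case: c IH => [|y c] IH //=.
rewrite in_cons => /orP [/eqP [-> ->]|/IH [H1 H2]].
  by rewrite !inE !eqxx orbT.
by split; rewrite in_cons; apply/orP; right.
Qed.

Lemma zip_mem2 (s t : seq V) u w : (u, w) \in zip s t -> w \in t.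
Proof.
elim: s t => [|x s IH] [|y t] //=; rewrite !in_cons => /orP [/eqP [_ ->]|/IH ->].
  by rewrite eqxx.
by rewrite orbT.
Qed.

Lemma zip_succ (c : seq V) u w w' : uniq c -> (u, w) \in zip c (behead c) ->
  (u, w') \in zip c (behead c) -> w = w'.
Proof.
elim: c => [|x c IH] //=; case: c IH => [|y c] IH //= /andP [Hx Hu].
rewrite !in_cons => /orP [/eqP [E1 E2]|H1] /orP [/eqP [E3 E4]|H2].
- by rewrite E2 E4.
- by subst; case: (zip_mem H2) => H _; rewrite H in Hx.
- by subst; case: (zip_mem H1) => H _; rewrite H in Hx.
- exact: IH.
Qed.

Lemma zip_pred (c : seq V) u u' w : uniq c -> (u, w) \in zip c (behead c) ->
  (u', w) \in zip c (behead c) -> u = u'.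
Proof.
elim: c => [|x c IH] //=; case: c IH => [|y c] IH //= /andP [Hx Hu].
move: (Hu) => /= /andP [Hy _].
rewrite !in_cons => /orP [/eqP [E1 E2]|H1] /orP [/eqP [E3 E4]|H2].
- by rewrite E1 E3.
- by subst; move: (zip_mem2 H2) => /= H; rewrite H in Hy.
- by subst; move: (zip_mem2 H1) => /= H; rewrite H in Hy.
- exact: IH.
Qed.

Lemma head_no_pred (x : V) c u : uniq (x :: c) -> (u, x) \notin zip (x :: c) c.
Proof.
move=> /= /andP [Hx _]; apply/negP => H.
by move: (zip_mem2 H); rewrite (negbTE Hx).
Qed.

Lemma has_pred (x : V) c v : v \in c -> exists u, (u, v) \in zip (x :: c) c.
Proof.
elim: c x => [|y c IH] x //=; rewrite in_cons => /orP [/eqP ->|H].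
  by exists x; rewrite inE eqxx.
case: (IH y H) => u Hu; exists u; by rewrite in_cons Hu orbT.
Qed.

Lemma flatten_disj (C : seq (seq V)) c c' x : uniq (flatten C) -> c \in C -> c' \in C ->
  x \in c -> x \in c' -> c = c'.
Proof.
elim: C => [|c0 C IH] //=; rewrite cat_uniq => /and3P [_ Hd Hu].
have Hn : forall d, d \in C -> x \in c0 -> x \in d -> False.
  move=> d Hd' H0 H1; move/hasP: Hd; apply; exists x => //.
  by apply/flattenP; exists d.
rewrite !in_cons => /orP [/eqP ->|H1] /orP [/eqP ->|H2] // Hx Hx'.
- by case: (Hn _ H2 Hx Hx').
- by case: (Hn _ H1 Hx' Hx).
- exact: IH.
Qed.

Lemma uniq_in_flatten (C : seq (seq V)) c : uniq (flatten C) -> c \in C -> uniq c.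
Proof.
elim: C => [|c0 C IH] //=; rewrite cat_uniq => /and3P [H0 _ Hu].
by rewrite in_cons => /orP [/eqP ->|]; [|apply: IH].
Qed.
End Seqs.

Section Ch.
Variable V : finType.
Variable C : seq (seq V).
Hypothesis Hne : all (fun c => c != [::]) C.
Hypothesis Hu : uniq (flatten C).
Hypothesis Hcov : forall v : V, v \in flatten C.

Lemma chE p : (p \in chain_edges C) = has (fun c => p \in zip c (behead c)) C.
Proof. by rewrite inE. Qed.

Lemma srcP v : reflect (exists c, (v :: c) \in C) (v \in sources C).
Proof.
rewrite inE; apply: (iffP hasP) => [[c Hc /andP [Hn /eqP Hh]]|[c Hc]].
  by case: c Hc Hn Hh => [|x c] //= Hc _ Hx; exists c; rewrite -Hx.
by exists (v :: c) => //=; rewrite eqxx.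
Qed.

Lemma succ_uniq u w w' : (u, w) \in chain_edges C -> (u, w') \in chain_edges C -> w = w'.
Proof.
rewrite !chE => /hasP [c Hc H1] /hasP [c' Hc' H2].
have E : c = c' by apply: (flatten_disj Hu Hc Hc' (proj1 (zip_mem H1)) (proj1 (zip_mem H2))).
subst c'; exact: (zip_succ (uniq_in_flatten Hu Hc) H1 H2).
Qed.

Lemma pred_uniq u u' w : (u, w) \in chain_edges C -> (u', w) \in chain_edges C -> u = u'.
Proof.
rewrite !chE => /hasP [c Hc H1] /hasP [c' Hc' H2].
have E : c = c' by apply: (flatten_disj Hu Hc Hc' (proj2 (zip_mem H1)) (proj2 (zip_mem H2))).
subst c'; exact: (zip_pred (uniq_in_flatten Hu Hc) H1 H2).
Qed.

Lemma edge_nsrc u w : (u, w) \in chain_edges C -> w \notin sources C.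
Proof.
rewrite chE => /hasP [c Hc H1]; apply/negP => /srcP [c' Hc'].
have E : c = w :: c'.
  by apply: (flatten_disj Hu Hc Hc' (proj2 (zip_mem H1))); rewrite inE eqxx.
subst c; move: (head_no_pred u (uniq_in_flatten Hu Hc')).
by rewrite H1.
Qed.

Lemma nsrc_pred v : v \notin sources C -> exists u, (u, v) \in chain_edges C.
Proof.
move=> Hv; case/flattenP: (Hcov v) => c Hc Hvc.
move/allP: Hne => /(_ c Hc); case: c Hc Hvc => [|x c] // Hc; rewrite in_cons => /orP [/eqP E|H] _.
  by subst x; case/negP: Hv; apply/srcP; exists c.
case: (has_pred x H) => u Hu'; exists u; rewrite chE; apply/hasP; by exists (x :: c).
Qed.

Lemma card_sources : #|sources C| = size C.
Proof.
move: Hne Hu; elim: C => [|c0 C' IH] /=.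
  by move=> _ _; apply/eqP; rewrite cards_eq0; apply/eqP/setP => v; rewrite !inE.
case: c0 => [|x c] //= Hne' /andP [Hx Hu2].
move: (Hu2); rewrite cat_uniq => /and3P [_ _ Hu''].
rewrite mem_cat negb_or in Hx; case/andP: Hx => _ Hx.
have -> : sources (((x :: c) :: C')) = x |: sources C'.
  by apply/setP => v; rewrite !inE /= eq_sym.
rewrite cardsU1 IH //.
suff -> : x \notin sources C' by [].
apply/negP; rewrite inE => /hasP [d Hd' /andP [Hn /eqP Hh]].
case/negP: Hx; apply/flattenP; exists d => //.
case: d Hd' Hn Hh => [|y d] //= _ _ ->; by rewrite inE eqxx.
Qed.
End Ch.

Lemma sum_iota2 L : 2 * (\sum_(j <- iota 2 L) (j - 2)) + L = L * L.
Proof.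
elim: L => [|L IH]; first by rewrite big_nil.
rewrite -[L.+1]addn1 iotaD big_cat big_seq1 /=; nia.
Qed.

Lemma count_iota2 L k : 1 <= k <= L + 1 -> \sum_(j <- iota 2 L) (j <= k) = k - 1.
Proof.
move=> /andP [H1 H2].
have -> : L = (k - 1) + (L - (k - 1)) by lia.
rewrite iotaD big_cat /=.
rewrite big_seq (eq_bigr (fun _ => 1)); last by move=> j; rewrite mem_iota => /andP [_ Hj]; 
  rewrite (_ : j <= k = true) //; lia.
rewrite -big_seq sum1_size size_iota.
rewrite big_seq big1 ?addn0 // => j; rewrite mem_iota => /andP [Hj _].
rewrite (_ : j <= k = false) //; lia.
Qed.

Lemma card_pairs (V : finType) (F : V -> V -> bool) :
  #|[set p : V * V | F p.1 p.2]| = \sum_u #|[set v | F u v]|.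
Proof.
symmetry.
rewrite (eq_bigr (fun u => \sum_v (if F u v then 1 else 0))); last first.
  by move=> u _; rewrite -sum1_card big_mkcond; apply: eq_bigr => v _; rewrite inE.
rewrite pair_big /= -sum1_card [RHS]big_mkcond /=; apply: eq_bigr => i _; by rewrite inE.
Qed.
Unset Implicit Arguments.

Theorem lemma2 (V : finType) (E : rel V) (Z : {set V})
  (C : seq (seq V)) (T : V -> nat) :
  zero_forcing_set E Z ->
  chain_cover C ->
  sources C = Z ->
  time_function C T ->
  in_graph_class C T E ->
  #|E_perf C T| = (#|V| * (#|V| + 1)) %/ 2 + (#|Z| * (2 * #|V| - #|Z| - 1)) %/ 2.
Proof.
move=> _ [Hne [Hu Hcov]] HZ [HTb [HTs [HTi HTe]]] _.
rewrite -HZ.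
have Hm : #|sources C| = size C by apply: card_sources.
set S := sources C in Hm *.
set n := #|V|. set m := #|S|.
have Hmn : m <= n by apply: max_card.
set L := n - m.
have Hg : gamma C = L + 1 by rewrite /gamma -Hm /L /m /n; lia.
set Ch := chain_edges C.
have HT1 v : v \in S -> T v = 1 by apply: HTs.
have HT2 v : v \notin S -> 2 <= T v.
  move=> Hv; case: (nsrc_pred Hne Hcov Hv) => u Huv.
  move: (HTe _ _ Huv) (HTb u); lia.
have HTL v : T v <= L + 1 by move: (HTb v); rewrite Hg; lia.
have Hperm : perm_eq (map T (enum (~: S))) (iota 2 L).
  have Hun : uniq (map T (enum (~: S))).
    rewrite map_inj_in_uniq ?enum_uniq //.
    move=> x y Hx Hy; apply: HTi; rewrite inE.
      by move: Hx; rewrite mem_enum inE.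
    by move: Hy; rewrite mem_enum inE.
  have Hsub : {subset map T (enum (~: S)) <= iota 2 L}.
    move=> j /mapP [v]; rewrite mem_enum inE => Hv ->.
    rewrite mem_iota; move: (HT2 v Hv) (HTL v); lia.
  have Hsz : size (iota 2 L) <= size (map T (enum (~: S))).
    rewrite size_iota size_map -cardE; move: (cardsC S); rewrite /L /m /n; lia.
  case: (uniq_min_size Hun Hsub Hsz) => _ Heq.
  apply: uniq_perm => //; exact: iota_uniq.
have Hsum (F : nat -> nat) : \sum_(v in ~: S) F (T v) = \sum_(j <- iota 2 L) F j.
  rewrite -big_enum -(perm_big _ Hperm) big_map; by [].
have Tmax_e u w : (u, w) \in Ch -> Tmax C T u = T w - 1.
  move=> Huw; rewrite /Tmax; case: pickP => [w' Hw'|H].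
    by rewrite (succ_uniq Hu Hw' Huw).
  by move: (H w); rewrite Huw.
have Tmax_s u : (forall w, (u, w) \notin Ch) -> Tmax C T u = L + 1.
  move=> H; rewrite /Tmax; case: pickP => [w' Hw'|_]; last by [].
  by move: (H w'); rewrite Hw'.
have Tmax_b u : 1 <= Tmax C T u <= L + 1.
  rewrite /Tmax; case: pickP => [w Hw|_]; last by lia.
  move: (HT2 w (edge_nsrc Hu Hw)) (HTL w); lia.
have Hcnt k : 1 <= k <= L + 1 -> #|[set v | T v <= k]| = m + (k - 1).
  move=> Hk; rewrite -sum1_card big_mkcond /= (bigID (fun v => v \in S)) /=.
  rewrite (eq_bigr (fun _ => 1)); last first.
    by move=> v Hv; rewrite inE HT1 //; case/andP: Hk => ->.
  rewrite (eq_bigl (fun v => v \in S)) // sum1_card /m; congr (_ + _).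
  rewrite -(count_iota2 Hk) -Hsum; apply: eq_big => v; first by rewrite !inE.
  by rewrite inE.
have Hsnd : [set p.2 | p in Ch] = ~: S.
  apply/setP => v; rewrite inE; apply/imsetP/idP => [[p Hp ->]|Hv].
    by case: p Hp => u w /= Hp; apply: (edge_nsrc Hu Hp).
  by case: (nsrc_pred Hne Hcov Hv) => u Huv; exists (u, v).
have Hinj2 : {in Ch &, injective (fun p : V * V => p.2)}.
  move=> [u w] [u' w'] /= H1 H2 Ew; subst w'; by rewrite (pred_uniq Hu H1 H2).
have Hinj1 : {in Ch &, injective (fun p : V * V => p.1)}.
  move=> [u w] [u' w'] /= H1 H2 Eu; subst u'; by rewrite (succ_uniq Hu H1 H2).
have HcCh : #|Ch| = L.
  rewrite -(card_in_imset Hinj2) Hsnd; move: (cardsC S); rewrite /L /m /n; lia.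
set NS := [set p.1 | p in Ch].
have HcNS : #|NS| = L by rewrite card_in_imset.
set P := [set p : V * V | T p.2 <= Tmax C T p.1].
have HE : E_perf C T = Ch :|: P by [].
have HI : Ch :&: P = set0.
  apply/setP => [[u w]]; rewrite in_setI in_set0; apply/negP => /andP [H1 H2].
  by move: H2; rewrite inE /=; rewrite (Tmax_e _ _ H1); move: (HT2 w (edge_nsrc Hu H1)); lia.
have HP : #|P| = n * m + \sum_u (Tmax C T u - 1).
  rewrite (card_pairs (fun a b => T b <= Tmax C T a)) (eq_bigr (fun u => m + (Tmax C T u - 1))); last first.
    by move=> u _; apply: Hcnt.
  by rewrite big_split /= sum_nat_const.
have HS : \sum_u (Tmax C T u - 1) = \sum_(j <- iota 2 L) (j - 2) + m * L.
  rewrite (bigID (fun u => u \in NS)) /=; congr (_ + _).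
    rewrite (eq_bigl (fun u => u \in NS)) // big_imset /=; last exact: Hinj1.
    rewrite (eq_bigr (fun p => T p.2 - 2)); last first.
      by move=> [u w] H; rewrite /= (Tmax_e _ _ H); lia.
    rewrite -(big_imset (fun v => T v - 2) Hinj2) /= Hsnd.
    exact: (Hsum (fun j => j - 2)).
  rewrite (eq_bigr (fun _ => L)); last first.
    move=> u Hu'; rewrite Tmax_s ?addnK // => w; apply/negP => Hw.
    by case/negP: Hu'; apply/imsetP; exists (u, w).
  rewrite (eq_bigl (fun u => u \in ~: NS)); last by move=> u; rewrite inE.
  rewrite sum_nat_const; congr (_ * _); move: (cardsC NS); rewrite HcNS /L /m /n; lia.
rewrite HE cardsU HI cards0 subn0 HcCh HP HS.
have HX := sum_iota2 L.
set X := \sum_(j <- iota 2 L) (j - 2) in HX *.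
have Hev x : exists a, x * (x + 1) = 2 * a.
  elim: x => [|x [a Ha]]; first by exists 0.
  by exists (a + x + 1); nia.
have Hn : n = m + L by rewrite /L; lia.
case: (Hev n) => a Ha; rewrite Ha mulKn //.
have [b Hb] : exists b, m * (2 * (m + L) - m - 1) = 2 * b.
  case: (m) => [|m']; first by exists 0; rewrite mul0n.
  case: (Hev m') => c Hc; exists (c + m'.+1 * L); nia.
rewrite {2}Hn Hb mulKn //.
rewrite Hn in Ha Hb; nia.
Qed.
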